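(* Let $\mathbb H\subseteq\mathcal G^{\mathrm{dyad}}$ be a group, $n,m\ge1$, $0\le k\le n\wedge m$, $0\le r\le(n\wedge m)-k$, and let $f:((0,1]\times\mathbb R)^n\to\mathbb R$, $f':((0,1]\times\mathbb R)^m\to\mathbb R$ be measurable with $f\in L_2^n$, $f'\in L_2^m$ and $\int_{((0,1]\times\mathbb R)^k}|f(\alpha,\gamma,\rho)f'(\rho,\gamma,\beta)|\,d\mathbbm m^{\otimes k}(\rho)<\infty$ for all $(\alpha,\beta,\gamma)\in((0,1]\times\mathbb R)^{n-k-r}\times((0,1]\times\mathbb R)^{m-k-r}\times((0,1]\times\mathbb R)^r$. Define $$(f\otimes_k^rf')(\alpha,\beta,\gamma)=\Pi_x(\gamma)\int_{((0,1]\times\mathbb R)^k}f(\alpha,\gamma,\rho)f'(\rho,\gamma,\beta)\,d\mathbbm m^{\otimes k}(\rho),$$ where $\Pi_x(\gamma)$ is the product of the $x$-coordinates of $\gamma$. If $f$ is constant on the orbits of $\mathbb H[n]$ and $f'$ is constant on the orbits of $\mathbb H[m]$, then $f\otimes_k^rf'$ is constant on the orbits of $\mathbb H[n+m-2k-r]$.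
   Context: $\mu$ is a $\sigma$-finite Borel measure on $\mathbb R$ and $\mathbbm m=\lambda\otimes\mu$ on $(0,1]\times\mathbb R$ with $\lambda$ Lebesgue measure; $L_2^n=L_2(((0,1]\times\mathbb R)^n,\mathbbm m^{\otimes n})$. $\mathcal G^{\mathrm{dyad}}$ is the group of maps $g_\pi(t)=\pi(j)2^{-d}-(j2^{-d}-t)$ for $t\in((j-1)2^{-d},j2^{-d}]$, $\pi$ a permutation of $\{1,\dots,2^d\}$, $d\ge0$. For $g\in\mathcal G^{\mathrm{dyad}}$, $g[p]((t_1,x_1),\dots,(t_p,x_p))=((g(t_1),x_1),\dots,(g(t_p),x_p))$ and $\mathbb H[p]=\{g[p]:g\in\mathbb H\}$; the orbit of $z$ is $\{g[p](z):g\in\mathbb H\}$. *)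

(* Defs.v *)
From HB Require Import structures.
From mathcomp Require Import all_boot all_order all_algebra fingroup perm.
From mathcomp Require Import all_classical all_reals all_analysis.
Set Implicit Arguments. Unset Strict Implicit. Unset Printing Implicit Defensive.
Import Order.TTheory GRing.Theory Num.Theory.
Import numFieldNormedType.Exports.
Local Open Scope classical_set_scope.
Local Open Scope ring_scope.

Section mm_def.
Context (R : realType) (mu : {sigma_finite_measure set R -> \bar R}).

(* the base measure  m = lambda (x) mu  on  R x R  (restriction to (0,1] x R
   is done by integrating over the domain sets below) *)
Definition mm := ((@lebesgue_measure R) \x mu)%E.

Lemma mm_sigma_finite : sigma_finite setT mm.
Proof.
have /sigma_finiteP[F [TF ndF Foo]] := sigma_finiteT (@lebesgue_measure R).
have /sigma_finiteP[G [TG ndG Goo]] := sigma_finiteT mu.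
exists (fun n => F n `*` G n).
 apply/seteqP; split => -[x y] // _.
  have [n _ Fnx] : (\bigcup_n F n) x by rewrite -TF.
  have [k _ Gky] : (\bigcup_n G n) y by rewrite -TG.
  exists (maxn n k) => //; split.
  - by move: x Fnx; exact/subsetPset/ndF/leq_maxl.
  - by move: y Gky; exact/subsetPset/ndG/leq_maxr.
move=> k; have [? ?] := Foo k; have [? ?] := Goo k.
split; first exact: measurableX.
by rewrite /mm product_measure1E// lte_mul_pinfty// ge0_fin_numE.
Qed.

HB.instance Definition _ := Measure.on mm.
HB.instance Definition _ := Measure_isSigmaFinite.Build _ _ _ mm mm_sigma_finite.
End mm_def.

(* A measure space packaged with its display, for the recursive k-fold product *)
Record msp (R : realType) := MSp {
  msp_d : measure_display;
  msp_T : measurableType msp_d;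
  msp_P : {measure set msp_T -> \bar R} }.

(* pw mu k = ((R x R)^k, m^{(x) k}) realized on nested pairs
   ((...((tt, c1), c2) ...), ck) with the iterated product measure *)
Fixpoint pw (R : realType) (mu : {sigma_finite_measure set R -> \bar R})
    (k : nat) : msp R :=
  match k with
  | 0 => @MSp R _ unit (\d_tt)%R
  | S k' => @MSp R _ _ (msp_P (pw mu k') \x mm mu)%E
  end.

Fixpoint flat (R : realType) (mu : {sigma_finite_measure set R -> \bar R})
    (k : nat) : msp_T (pw mu k) -> seq (R * R) :=
  match k with
  | 0 => fun _ => [::]
  | S k' => fun x => rcons (@flat R mu k' x.1) x.2
  end.

Definition in_dom (R : realType) (s : seq (R * R)) : bool :=
  all (fun c => (0 < c.1) && (c.1 <= 1)) s.

Definition Dom (R : realType) (mu : {sigma_finite_measure set R -> \bar R})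
    (k : nat) : set (msp_T (pw mu k)) :=
  [set z | in_dom (flat z)].

Definition Pix (R : realType) (s : seq (R * R)) : R := \prod_(c <- s) c.2.

(* the dyadic map g_pi, with zero-based labelling of the dyadic intervals:
   for t in (i 2^-d, (i+1) 2^-d], g t = (pi i + 1) 2^-d - ((i+1) 2^-d - t);
   it is extended by the identity outside (0,1]. *)
Definition gdyad (R : realType) (d : nat) (pi : {perm 'I_(2 ^ d)}) (t : R) : R :=
  if (0 < t) && (t <= 1) then
    \sum_(i < 2 ^ d)
      (if (i%:R / 2 ^+ d < t) && (t <= i.+1%:R / 2 ^+ d)
       then (pi i).+1%:R / 2 ^+ d - (i.+1%:R / 2 ^+ d - t) else 0)
  else t.

Definition Gdyad (R : realType) : set (R -> R) :=
  [set g | exists d (pi : {perm 'I_(2 ^ d)}), g = gdyad pi].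

Definition dyad_subgroup (R : realType) (H : set (R -> R)) : Prop :=
  [/\ H `<=` @Gdyad R, H id,
      (forall g h, H g -> H h -> H (g \o h)) &
      (forall g, H g -> exists2 h, H h & h \o g = id /\ g \o h = id)].

Definition act (R : realType) (g : R -> R) (z : seq (R * R)) : seq (R * R) :=
  map (fun c => (g c.1, c.2)) z.

(* (f (x)_k^r f')(alpha, beta, gamma), the argument z = (alpha, beta, gamma)
   of length n + m - 2k - r being split as
   alpha = first n-k-r coordinates, beta = next m-k-r, gamma = last r *)
Definition contr (R : realType) (mu : {sigma_finite_measure set R -> \bar R})
    (n m k r : nat) (f f' : seq (R * R) -> R) (z : seq (R * R)) : R :=
  let alpha := take (n - k - r) z in
  let beta := take (m - k - r) (drop (n - k - r) z) in
  let gamma := drop ((n - k - r) + (m - k - r)) z in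
  Pix gamma * Rintegral (msp_P (pw mu k)) (@Dom R mu k)
    (fun rho => f (alpha ++ gamma ++ flat rho) * f' (flat rho ++ gamma ++ beta)).

Arguments Dom {R} mu k.
Arguments flat {R mu k}.
Arguments contr {R} mu n m k r f f' z.
Arguments pw {R} mu k.

(* Main.v *)
Require Import Defs.
From HB Require Import structures.
From mathcomp Require Import all_boot all_order all_algebra fingroup perm.
From mathcomp Require Import all_classical all_reals all_analysis.
Import Order.TTheory GRing.Theory Num.Theory.
Import numFieldNormedType.Exports.
Local Open Scope classical_set_scope.
Local Open Scope ring_scope.
From mathcomp Require Import ring lra.
From mathcomp Require Import zify.


Import Order.TTheory GRing.Theory Num.Theory.
Import numFieldNormedType.Exports.
Local Open Scope classical_set_scope.
Local Open Scope ring_scope.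
Import HBNNSimple.

Section inv.
Local Open Scope ereal_scope.
Context d (T : measurableType d) (R : realType) (P : {measure set T -> \bar R}).

Lemma sup_le (phi : T -> T) (mphi : measurable_fun setT phi)
  (pres : forall A, measurable A -> P (phi @^-1` A) = P A) (F : T -> \bar R) :
  ereal_sup [set sintegral P h | h in [set h : {nnsfun T >-> R} | forall x, (h x)%:E <= F x]] <=
  ereal_sup [set sintegral P h | h in [set h : {nnsfun T >-> R} | forall x, (h x)%:E <= F (phi x)]].
Proof.
apply: ub_ereal_sup => _ [h hF <-].
pose h' := (h : T -> R) \o phi.
have mh' : measurable_fun setT h' by apply: measurableT_comp.
have fh' : finite_set (range h').
  apply: sub_finite_set (fimfunP h) => _ [x _ <-]; by exists (phi x).
have nh' : forall x, (0 <= h' x)%R by move=> x; rewrite /h' /=.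
pose H' : {nnsfun T >-> R} := HB.pack h' (isMeasurableFun.Build _ _ _ _ h' mh')
   (FiniteImage.Build _ _ h' fh') (isNonNegFun.Build _ _ h' nh').
apply: ereal_sup_ubound; exists H'; first by move=> x; exact: hF.
rewrite /sintegral; apply: eq_fsbigr => r _.
congr (_ * _); rewrite -[RHS]pres //.
Qed.

Lemma sup_eq (phi psi : T -> T) (mphi : measurable_fun setT phi) (mpsi : measurable_fun setT psi)
  (presphi : forall A, measurable A -> P (phi @^-1` A) = P A)
  (prespsi : forall A, measurable A -> P (psi @^-1` A) = P A)
  (phipsi : forall x, phi (psi x) = x) (G : T -> \bar R) :
  ereal_sup [set sintegral P h | h in [set h : {nnsfun T >-> R} | forall x, (h x)%:E <= G (phi x)]] =
  ereal_sup [set sintegral P h | h in [set h : {nnsfun T >-> R} | forall x, (h x)%:E <= G x]].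
Proof.
apply/eqP; rewrite eq_le; apply/andP; split; last exact: sup_le.
apply: le_trans (@sup_le psi mpsi prespsi (fun x => G (phi x))) _.
rewrite le_eqVlt; apply/orP; left; apply/eqP; congr (ereal_sup _); apply/seteqP; split => _ [h hh <-]; exists h => // x.
- by move: (hh x) => /=; rewrite phipsi.
- by rewrite /= phipsi.
Qed.

Lemma int_inv (phi psi : T -> T) (mphi : measurable_fun setT phi) (mpsi : measurable_fun setT psi)
  (presphi : forall A, measurable A -> P (phi @^-1` A) = P A)
  (prespsi : forall A, measurable A -> P (psi @^-1` A) = P A)
  (phipsi : forall x, phi (psi x) = x) (D : set T) (DD : forall x, D (phi x) = D x)
  (F : T -> \bar R) :
  \int[P]_(x in D) F (phi x) = \int[P]_(x in D) F x.
Proof.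
have E : (fun x => F (phi x)) \_ D = (F \_ D) \o phi.
  apply/funext => x /=; rewrite /patch /=.
  rewrite /patch /=; have -> : (phi x \in D) = (x \in D) by apply/idP/idP => /set_mem H1; apply/mem_set; rewrite ?DD in H1 *.
  by [].
rewrite /integral /=.
rewrite -(@sup_eq phi psi mphi mpsi presphi prespsi phipsi ((F \_ D)^\+)).
rewrite -(@sup_eq phi psi mphi mpsi presphi prespsi phipsi ((F \_ D)^\-)).
have EP : (F \_ D \o phi)^\+ = fun x => (F \_ D)^\+ (phi x) by apply/funext => x; rewrite !funeposE.
have EN : (F \_ D \o phi)^\- = fun x => (F \_ D)^\- (phi x) by apply/funext => x; rewrite !funenegE.
by rewrite E EP EN.
Qed.
End inv.

Import Order.TTheory GRing.Theory Num.Theory.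
Import numFieldNormedType.Exports.
Local Open Scope classical_set_scope.
Local Open Scope ring_scope.
Section prod.
Local Open Scope ereal_scope.
Context d1 d2 (T1 : measurableType d1) (T2 : measurableType d2) (R : realType).
Variable m1 : {measure set T1 -> \bar R}.
Variable m2 : {sigma_finite_measure set T2 -> \bar R}.

Lemma prod_pres (f1 : T1 -> T1) (f2 : T2 -> T2) (mf1 : measurable_fun setT f1)
  (mf2 : measurable_fun setT f2)
  (p1 : forall A, measurable A -> m1 (f1 @^-1` A) = m1 A)
  (p2 : forall A, measurable A -> m2 (f2 @^-1` A) = m2 A)
  (A : set (T1 * T2)) : measurable A ->
  (m1 \x m2) ((fun x => (f1 x.1, f2 x.2)) @^-1` A) = (m1 \x m2) A.
Proof.
move=> mA; rewrite /product_measure1 /=.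
transitivity (\int[m1]_x (m2 \o xsection A) (f1 x)).
  apply: eq_integral => x _ /=.
  have -> : xsection ((fun x => (f1 x.1, f2 x.2)) @^-1` A) x = f2 @^-1` (xsection A (f1 x)).
    by apply/seteqP; split => y; rewrite /xsection /preimage /= !inE.
  by rewrite p2 //; exact: measurable_xsection.
have mphi := measurable_fun_xsection m2 mA.
have := @ge0_integral_pushforward _ _ _ _ R f1 mf1 m1 setT (m2 \o xsection A) measurableT
  (measurable_funS _ _ mphi) (fun _ _ => measure_ge0 _ _).
rewrite preimage_setT => <-.
apply: eq_measure_integral => B mB _ /=.
by rewrite /pushforward p1.
by [].
by [].
Qed.
End prod.

Section dy.
Context (R : realType) (d : nat).
Local Notation N := ((2:R) ^+ d).

Definition Iv (i : nat) : set R := [set t | (i%:R / N < t) && (t <= i.+1%:R / N)].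

Lemma N_gt0 : 0 < N. Proof. by rewrite exprn_gt0. Qed.

Lemma N_nat : (2 ^ d)%:R = N :> R. Proof. by rewrite natrX. Qed.

Lemma Iv_sub01 (i : 'I_(2 ^ d)) t : Iv i t -> (0 < t) && (t <= 1).
Proof.
rewrite /Iv /= => /andP[h1 h2]; apply/andP; split.
  by apply: le_lt_trans h1; rewrite divr_ge0 // ltW // N_gt0.
apply: le_trans h2 _; rewrite ler_pdivrMr ?N_gt0 // mul1r -N_nat ler_nat.
exact: ltn_ord.
Qed.

Lemma Iv_uniq (i j : nat) t : Iv i t -> Iv j t -> i = j.
Proof.
rewrite /Iv /= => /andP[a1 a2] /andP[b1 b2].
have N0 := N_gt0.
have h1 : (i%:R / N < j.+1%:R / N) by exact: lt_le_trans a1 b2.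
have h2 : (j%:R / N < i.+1%:R / N) by exact: lt_le_trans b1 a2.
rewrite ltr_pM2r ?invr_gt0 // ltr_nat in h1.
rewrite ltr_pM2r ?invr_gt0 // ltr_nat in h2.
move: h1 h2; rewrite !ltnS => h1 h2.
by apply/eqP; rewrite eqn_leq h1 h2.
Qed.

Lemma Iv_shift (a b : nat) t : Iv a t = Iv b (t + (b%:R - a%:R) / N).
Proof.
have N0 := N_gt0.
rewrite /Iv /= !mulrBl -!natr1 !mulrDl !mul1r.
set x := a%:R / N; set y := b%:R / N; set w := N^-1.
rewrite propeqE; split => /andP[h1 h2]; apply/andP; split; lra.
Qed.

Lemma Iv_cover t : (0 < t) && (t <= 1) -> exists i : 'I_(2 ^ d), Iv i t.
Proof.
move=> /andP[t0 t1].
suff H : forall M, (M <= 2 ^ d)%N -> t <= M%:R / N -> exists2 i : nat, (i < M)%N & Iv i t.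
  have [|i iM Ii] := H (2 ^ d)%N (leqnn _).
    by rewrite N_nat divff // gt_eqF // N_gt0.
  by exists (Ordinal iM).
elim=> [|M IH] MN tM.
  by move: tM; rewrite mul0r => /(lt_le_trans t0); rewrite ltxx.
have [tle|tgt] := leP t (M%:R / N).
  have [i iM Ii] := IH (ltnW MN) tle.
  by exists i => //; rewrite ltnS ltnW.
by exists M => //; rewrite /Iv /= tgt tM.
Qed.


Variable pi : {perm 'I_(2 ^ d)}.
Local Notation g := (gdyad pi).
Definition cc (i : 'I_(2 ^ d)) : R := ((pi i)%:R - i%:R) / N.

Lemma gdyad_in (i : 'I_(2 ^ d)) t : Iv i t -> g t = t + cc i.
Proof.
move=> It; rewrite /gdyad (Iv_sub01 _ _ It) (bigD1 i) //= big1 ?addr0.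
  rewrite /Iv /= in It; rewrite It /cc.
  rewrite -[(pi i).+1%:R]natr1 -[i.+1%:R]natr1 !mulrDl ?mulNr.
  set x := (pi i)%:R / N; set y := i%:R / N; set w := 1 / N.
  lra.
move=> j ji; case: ifP => // Ij.
by move: ji; rewrite (ord_inj (Iv_uniq _ _ _ It Ij)) eqxx.
Qed.

Lemma gdyad_out (t : R) : ~~ ((0 < t) && (t <= 1)) -> g t = t.
Proof. by move=> h; rewrite /gdyad (negbTE h). Qed.

Lemma gdyad_01 (t : R) : ((0 < g t) && (g t <= 1)) = ((0 < t) && (t <= 1)).
Proof.
case: (boolP ((0 < t) && (t <= 1))) => h; last by rewrite gdyad_out // (negbTE h).
have [i Ii] := Iv_cover _ h.
rewrite (gdyad_in _ _ Ii); apply: (@Iv_sub01 (pi i)).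
by rewrite /cc -Iv_shift.
Qed.

Definition Outs (A : set R) := A `&` [set t | ~~ ((0 < t) && (t <= 1))].

Lemma gdyad_pre (A : set R) : g @^-1` A =
  Outs A `|` \bigcup_(i in [set: 'I_(2 ^ d)]) ((fun t => t + cc i) @^-1` (A `&` Iv (pi i))).
Proof.
apply/seteqP; split => t /=.
  case: (boolP ((0 < t) && (t <= 1))) => h tA.
    have [i Ii] := Iv_cover _ h; right; exists i => //=.
    by rewrite (gdyad_in _ _ Ii) in tA; split => //; rewrite /cc -Iv_shift.
  by left; split => //; rewrite -(gdyad_out _ h).
case=> [[tA h]|[i _ [tA Ii]]]; first by rewrite gdyad_out.
have Iit : Iv i t by rewrite (Iv_shift i (pi i)).
by rewrite (gdyad_in i t Iit).
Qed.

Lemma Iv_itv (i : nat) : Iv i = `]i%:R / N, i.+1%:R / N]%classic.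
Proof. by apply/seteqP; split => t; rewrite /= in_itv. Qed.

End dy.
Arguments Iv {R} d i.
Arguments Outs {R} A.
Arguments cc {R d} pi i.
Arguments Iv_itv {R d} i.
Arguments Iv_sub01 {R d} i t.
Arguments Iv_uniq {R d} i j t.
Arguments Iv_shift {R d} a b t.
Arguments Iv_cover {R d} t.
Arguments gdyad_pre {R d} pi A.

Section leb.
Context (R : realType).
Local Notation lam := (@lebesgue_measure R).

Lemma mshift (c : R) : measurable_fun setT (fun x : R => x + c).
Proof. by apply: measurable_realfun.measurable_funD => //; exact: measurable_cst. Qed.

Lemma leb_shift (c : R) (A : set R) : measurable A ->
  lam ((fun x => x + c) @^-1` A) = lam A.
Proof.
move=> mA.
have := @lebesgue_measure_unique R (pushforward lam ((fun x : R => x + c) : _ -> measurableTypeR R)).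
move=> /(_ (mshift c)) /(_ _ A mA); rewrite {1}/pushforward => -> //.
move=> _ [[a b]] _ <- /=.
rewrite /pushforward.
have -> : (fun x : R => x + c) @^-1` `]a, b]%classic = `]a - c, b - c]%classic.
  apply/seteqP; split => x /=; rewrite !in_itv /= ltrBlDr lerBrDr //.
rewrite !lebesgue_measure_itv /= !lte_fin ltrD2r.
by case: ifP => // _; congr EFin; ring.
Qed.

Section gleb.
Context (d : nat) (pi : {perm 'I_(2 ^ d)}).
Local Notation g := (@gdyad R d pi).

Lemma out01 : [set t : R | ~~ ((0 < t) && (t <= 1))] = ~` `]0, 1]%classic.
Proof. by apply/seteqP; split => t; rewrite /= in_itv /=; move/negP. Qed.

Lemma Outs_meas (A : set R) : measurable A -> measurable (Outs A).
Proof. by move=> mA; apply: measurableI => //; rewrite out01; apply: measurableC. Qed.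

Lemma piece_meas (A : set R) (i : 'I_(2 ^ d)) : measurable A ->
  measurable ((fun t => t + cc pi i) @^-1` (A `&` Iv d (pi i))).
Proof.
move=> mA; rewrite -[X in measurable X]setTI; apply: (mshift _) => //.
by apply: measurableI => //; rewrite Iv_itv; exact: measurable_itv.
Qed.

Lemma gdyad_measurable : measurable_fun setT g.
Proof.
move=> _ A mA; rewrite setTI gdyad_pre; apply: measurableU; first exact: Outs_meas.
by apply: fin_bigcup_measurable; [exact: finite_finset|move=> i _; exact: piece_meas].
Qed.

Lemma gdyad_pres (A : set R) : measurable A -> lam (g @^-1` A) = lam A.
Proof.
move=> mA.
have decA : A = Outs A `|` \bigcup_(i in [set: 'I_(2 ^ d)]) (A `&` Iv d i).
  apply/seteqP; split => t; last by case=> [[]|[i _ []]].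
  move=> tA; case: (boolP ((0 < t) && (t <= 1))) => h; last by left.
  by have [i Ii] := Iv_cover (d:=d) _ h; right; exists i.
have mI i : measurable (A `&` Iv d i).
  by apply: measurableI => //; rewrite Iv_itv; exact: measurable_itv.
have dis1 (F : 'I_(2 ^ d) -> set R) : (forall i, F i `<=` Iv d i) ->
    Outs A `&` \bigcup_(i in [set: 'I_(2 ^ d)]) F i = set0.
  move=> FI; apply/seteqP; split => t // [[_ h] [i _ /FI Ii]].
  by move: h => /=; rewrite (Iv_sub01 _ _ Ii).
have tr (F : 'I_(2 ^ d) -> set R) : (forall i, F i `<=` Iv d i) ->
    trivIset [set: 'I_(2 ^ d)] F.
  move=> FI i j _ _ [t [/FI Ii /FI Ij]]; exact: ord_inj (Iv_uniq _ _ _ Ii Ij).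
have sub1 i : (fun t => t + cc pi i) @^-1` (A `&` Iv d (pi i)) `<=` Iv d i.
  by move=> t [_ h]; rewrite (Iv_shift i (pi i)).
have mO : measurable (Outs A) by exact: Outs_meas.
have mU1 : measurable (\bigcup_(i in [set: 'I_(2 ^ d)])
    ((fun t => t + cc pi i) @^-1` (A `&` Iv d (pi i)))).
  by apply: fin_bigcup_measurable; [exact: finite_finset|move=> i _; exact: piece_meas].
have mU2 : measurable (\bigcup_(i in [set: 'I_(2 ^ d)]) (A `&` Iv d i)).
  by apply: fin_bigcup_measurable; [exact: finite_finset|move=> i _].
have d1 := dis1 _ sub1.
have d2 : Outs A `&` \bigcup_(i in [set: 'I_(2 ^ d)]) (A `&` Iv d i) = set0.
  by apply: dis1 => i t [].
rewrite gdyad_pre measureU //.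
rewrite [in RHS]decA measureU //.
congr (_ + _).
have t1 := tr _ sub1.
have t2 : trivIset [set: 'I_(2 ^ d)] (fun i => A `&` Iv d i) by apply: tr => i t [].
have fT : finite_set [set: 'I_(2 ^ d)] by exact: finite_finset.
have m1 : forall i : 'I_(2 ^ d), [set: 'I_(2 ^ d)] i ->
  measurable ((fun t => t + cc pi i) @^-1` (A `&` Iv d (pi i))) by move=> i _; exact: piece_meas.
have m2 : forall i : 'I_(2 ^ d), [set: 'I_(2 ^ d)] i -> measurable (A `&` Iv d i) by [].
rewrite (measure_fin_bigcup lam fT t1 m1) (measure_fin_bigcup lam fT t2 m2).
rewrite (eq_fsbigr (fun i => lam (A `&` Iv d (pi i)))); last first.
  by move=> i _; apply: leb_shift.
rewrite (reindex_fsbigT (fun i : 'I_(2 ^ d) => pi i) (fun j => lam (A `&` Iv d j))) //.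
by exists (pi^-1)%g => x; rewrite ?permK ?permKV.
Qed.
End gleb.
End leb.


Section T.
Context (R : realType) (mu : {sigma_finite_measure set R -> \bar R}).

Definition phig (g : R -> R) (c : R * R) : R * R := (g c.1, c.2).

Fixpoint Tk (g : R -> R) (k : nat) : msp_T (pw mu k) -> msp_T (pw mu k) :=
  match k with
  | 0 => fun x => x
  | S k' => fun x => (Tk g k' x.1, phig g x.2)
  end.

Lemma flat_Tk g k x : flat (Tk g k x) = act g (flat x).
Proof.
elim: k x => [//|k IH] x /=.
by rewrite IH /act map_rcons.
Qed.

Lemma size_flat k (x : msp_T (pw mu k)) : size (flat x) = k.
Proof. by elim: k x => [//|k IH] x /=; rewrite size_rcons IH. Qed.

Lemma Tk_comp g h k x : Tk g k (Tk h k x) = Tk (g \o h) k x.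
Proof. by elim: k x => [//|k IH] x /=; rewrite IH. Qed.

Lemma Tk_id g k x : (forall t, g t = t) -> Tk g k x = x.
Proof. by move=> gid; elim: k x => [//|k IH] [x [a b]] /=; rewrite IH /phig /= gid. Qed.


Lemma pair_meas d1 d2 (T1 : measurableType d1) (T2 : measurableType d2)
  (f1 : T1 -> T1) (f2 : T2 -> T2) : measurable_fun setT f1 -> measurable_fun setT f2 ->
  measurable_fun [set: (T1 * T2)%type] (fun x => (f1 x.1, f2 x.2)).
Proof.
move=> m1 m2; apply: measurable_fun_pair.
  by apply: measurableT_comp => //; exact: measurable_fst.
by apply: measurableT_comp => //; exact: measurable_snd.
Qed.

Lemma phig_meas d (pi : {perm 'I_(2 ^ d)}) :
  measurable_fun [set: (measurableTypeR R * R)%type] (phig (gdyad pi)).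
Proof.
apply: (@pair_meas _ _ (measurableTypeR R) R (gdyad pi) id) => //.
exact: gdyad_measurable.
Qed.

Lemma phig_pres d (pi : {perm 'I_(2 ^ d)}) A : measurable A ->
  mm mu ((phig (gdyad pi)) @^-1` A) = mm mu A.
Proof.
move=> mA; rewrite /mm.
apply: (@prod_pres _ _ (measurableTypeR R) R R lebesgue_measure mu (gdyad pi) id) => //.
- exact: gdyad_measurable.
- exact: gdyad_pres.
Qed.

Lemma Tk_meas d (pi : {perm 'I_(2 ^ d)}) k : measurable_fun setT (Tk (gdyad pi) k).
Proof.
elim: k => [|k IH] /=; first exact: measurable_id.
apply: pair_meas => //; exact: phig_meas.
Qed.

Lemma Tk_pres d (pi : {perm 'I_(2 ^ d)}) k A : measurable A ->
  msp_P (pw mu k) ((Tk (gdyad pi) k) @^-1` A) = msp_P (pw mu k) A.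
Proof.
elim: k A => [|k IH] A mA /=; first by [].
apply: (@prod_pres _ _ _ _ R (msp_P (pw mu k)) (mm mu) (Tk (gdyad pi) k) (phig (gdyad pi))) => //.
- exact: Tk_meas.
- exact: phig_meas.
- exact: phig_pres.
Qed.
End T.


Lemma in_dom_cat (R : realType) (s1 s2 : seq (R * R)) : in_dom (s1 ++ s2) = in_dom s1 && in_dom s2.
Proof. exact: all_cat. Qed.

Lemma in_dom_take (R : realType) n (s : seq (R * R)) : in_dom s -> in_dom (take n s).
Proof. by rewrite -{1}(cat_take_drop n s) in_dom_cat => /andP[]. Qed.

Lemma in_dom_drop (R : realType) n (s : seq (R * R)) : in_dom s -> in_dom (drop n s).
Proof. by rewrite -{1}(cat_take_drop n s) in_dom_cat => /andP[]. Qed.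

Lemma in_dom_act (R : realType) d (pi : {perm 'I_(2 ^ d)}) (s : seq (R * R)) :
  in_dom (act (gdyad pi) s) = in_dom s.
Proof. by rewrite /in_dom /act all_map; apply: eq_all => c /=; rewrite gdyad_01. Qed.

Theorem lemma5p5 (R : realType) (mu : {sigma_finite_measure set R -> \bar R})
    (H : set (R -> R)) (n m k r : nat) (f f' : seq (R * R) -> R) :
  dyad_subgroup H ->
  (1 <= n)%N -> (1 <= m)%N ->
  (k <= minn n m)%N -> (r <= minn n m - k)%N ->
  measurable_fun (Dom mu n) (fun z => f (flat z)) ->
  measurable_fun (Dom mu m) (fun z => f' (flat z)) ->
  (\int[msp_P (pw mu n)]_(z in Dom mu n) ((f (flat z)) ^+ 2)%:E < +oo)%E ->
  (\int[msp_P (pw mu m)]_(z in Dom mu m) ((f' (flat z)) ^+ 2)%:E < +oo)%E ->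
  (forall alpha beta gamma : seq (R * R),
      size alpha = (n - k - r)%N -> size beta = (m - k - r)%N ->
      size gamma = r ->
      in_dom alpha -> in_dom beta -> in_dom gamma ->
      (\int[msp_P (pw mu k)]_(rho in Dom mu k)
          `|f (alpha ++ gamma ++ flat rho) * f' (flat rho ++ gamma ++ beta)|%:E
        < +oo)%E) ->
  (forall g, H g -> forall z, size z = n -> in_dom z -> f (act g z) = f z) ->
  (forall g, H g -> forall z, size z = m -> in_dom z -> f' (act g z) = f' z) ->
  forall g, H g -> forall z, size z = (n + m - 2 * k - r)%N -> in_dom z ->
    contr mu n m k r f f' (act g z) = contr mu n m k r f f' z.
Proof.
move=> HG n1 m1 hk hr _ _ _ _ _ finv f'inv g Hg z sz dz.
have [Hsub _ _ Hinv] := HG.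
have [h Hh [hg gh]] := Hinv g Hg.
have fi := finv g Hg; have f'i := f'inv g Hg.
have [dg [pg eg]] := Hsub g Hg; have [dh [ph eh]] := Hsub h Hh.
rewrite /contr /=.
set a := (n - k - r)%N; set b := (m - k - r)%N.
rewrite /act -!map_drop -!map_take -/(act g _).
set al := take a z; set be := take b (drop a z); set ga := drop (a + b) z.
have sa : size al = a by rewrite size_takel //; lia.
have sb : size be = b by rewrite size_takel // size_drop; lia.
have sg : size ga = r by rewrite size_drop; lia.
have dal : in_dom al by exact: in_dom_take.
have dbe : in_dom be by apply: in_dom_take; exact: in_dom_drop.
have dga : in_dom ga by exact: in_dom_drop.
have -> : Pix (map (fun c => (g c.1, c.2)) ga) = Pix ga by rewrite /Pix big_map.
congr (_ * _); rewrite /Rintegral; congr fine.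
rewrite -/(act g al) -/(act g be) -/(act g ga).
subst g h.
have phipsi x : Tk R mu (gdyad pg) k (Tk R mu (gdyad ph) k x) = x.
  by rewrite Tk_comp Tk_id // => t; rewrite -[RHS]/(id t) -gh.
rewrite -(@int_inv _ _ R (msp_P (pw mu k)) (Tk R mu (gdyad pg) k) (Tk R mu (gdyad ph) k)
  (Tk_meas R mu dg pg k) (Tk_meas R mu dh ph k) (Tk_pres R mu dg pg k) (Tk_pres R mu dh ph k) phipsi).
  apply: eq_integral => x /[!inE] Dx /=.
  rewrite flat_Tk.
  have sx := size_flat R mu k x.
  rewrite -!map_cat -/(act _ (_ ++ _)) -/(act _ (_ ++ _)) fi ?f'i //.
  - by rewrite !size_cat sx sg sb; lia.
  - by rewrite !in_dom_cat dga dbe Dx.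
  - by rewrite !size_cat sx sg sa; lia.
  - by rewrite !in_dom_cat dga dal Dx.
by move=> x; rewrite /Dom /= flat_Tk in_dom_act.
Qed.
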